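(* Assume the demand is i.i.d. with pmf $P_X$. Let $b\in\mathcal B$ be a constant-distribution policy that is invariant for the initial battery distribution $\theta_1$, with $S_1\sim\theta_1$ independent of $X_1\sim P_X$, $W_1=S_1-X_1$ and $Y_1\sim b(\cdot\mid W_1)$. Then $I(W_1;Y_1)=I(W_1;X_1)$.
   Context: $\mathcal X=\{0,\dots,m_x\}$, $\mathcal Y=\{0,\dots,m_y\}$, $\mathcal S=\{0,\dots,m_s\}$ with $m_x\le m_y$; $\mathcal W=\{s-x\}$; $\mathcal Y_\circ(w)=\{y\in\mathcal Y:w+y\in\mathcal S\}$; $\mathcal B$ the conditional pmfs $b(y\mid w)$ with $b(\mathcal Y_\circ(w)\mid w)=1$. Demand $X_t$ i.i.d. $\sim P_X$ independent of $S_1$. The constant-distribution policy $b$ draws $Y_t\sim b(\cdot\mid W_t)$, $W_t=S_t-X_t$, $S_{t+1}=S_t+Y_t-X_t$. With $\theta_t(s)=P(S_t=s\mid Y^{t-1}=y^{t-1})$ and $\xi_t(w)=P(W_t=w\mid Y^{t-1}=y^{t-1})$, $b$ is invariant for $\theta_1$ if $\theta_t=\theta_1$ and $\xi_t=\xi_1$ for all $t$, where $\xi_1(w)=\sum_{(x,s):s-x=w}P_X(x)\theta_1(s)$. *)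

(* Defs.v *)
From HB Require Import structures.
From mathcomp Require Import all_boot all_order all_algebra.
From mathcomp Require Import reals exp.
Set Implicit Arguments. Unset Strict Implicit. Unset Printing Implicit Defensive.
Import Order.TTheory GRing.Theory Num.Theory.
Local Open Scope ring_scope.

Section FinProb.
Variables (R : realType) (Omega : finType) (p : Omega -> R).

Definition Pr (E : pred Omega) : R := \sum_(w | E w) p w.

(* mutual information I(F;G) of random variables F, G defined on Omega,
   as E[ ln ( P(F=f,G=g) / (P(F=f) P(G=g)) ) ]  (natural logarithm;
   outcomes of probability 0 do not contribute). *)
Definition mutinfo (A B : eqType) (F : Omega -> A) (G : Omega -> B) : R :=
  \sum_(w : Omega)
     p w * ln (Pr (fun v => (F v == F w) && (G v == G w))
               / (Pr (fun v => F v == F w) * Pr (fun v => G v == G w))).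
End FinProb.

(* The battery / demand model. X = {0..mx}, Y = {0..my}, S = {0..ms};
   values of W = S - X are integers. *)
Section Model.
Variables (R : realType) (mx my ms : nat).
Variables (PX : 'I_mx.+1 -> R) (theta1 : 'I_ms.+1 -> R) (b : int -> 'I_my.+1 -> R).

Definition is_pmf (T : finType) (q : T -> R) :=
  (forall t, 0 <= q t) /\ \sum_t q t = 1.

Definition inW (w : int) : Prop :=
  exists (s : 'I_ms.+1) (x : 'I_mx.+1), w = (s : nat)%:Z - (x : nat)%:Z.

Definition inYo (w : int) (y : 'I_my.+1) : bool :=
  (0 <= w + (y : nat)%:Z) && (w + (y : nat)%:Z <= (ms : nat)%:Z).

Definition in_B : Prop :=
  forall w, inW w ->
    is_pmf (b w) /\ \sum_(y | inYo w y) b w y = 1.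

(* sample space of the first n steps: (S_1, (X_1..X_n), (Y_1..Y_n)) *)
Definition Omega (n : nat) : finType :=
  ('I_ms.+1 * n.-tuple 'I_mx.+1 * n.-tuple 'I_my.+1)%type.

(* X_{i+1}, Y_{i+1} (0-based index i) as integers *)
Definition Xv n (o : Omega n) (i : nat) : int := (nth ord0 (val o.1.2) i : nat)%:Z.
Definition Yv n (o : Omega n) (i : nat) : int := (nth ord0 (val o.2) i : nat)%:Z.
(* S_{t+1} = S_1 + sum_{i<t} (Y_{i+1} - X_{i+1}), i.e. S_{t+1} = S_t + Y_t - X_t *)
Definition Sv n (o : Omega n) (t : nat) : int :=
  (o.1.1 : nat)%:Z + \sum_(i < t) (Yv o i - Xv o i).
Definition Wv n (o : Omega n) (t : nat) : int := Sv o t - Xv o t.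

(* joint pmf of the first n steps under the constant-distribution policy b:
   S_1 ~ theta1, X_t iid ~ PX independent of S_1, Y_t ~ b(.|W_t) *)
Definition joint n (o : Omega n) : R :=
  theta1 o.1.1 * \prod_(i < n) (PX (tnth o.1.2 i) * b (Wv o i) (tnth o.2 i)).

Definition xi1 (w : int) : R :=
  \sum_(x : 'I_mx.+1) \sum_(s : 'I_ms.+1 | (s : nat)%:Z - (x : nat)%:Z == w)
     PX x * theta1 s.

Definition Ypre n k (yk : k.-tuple 'I_my.+1) (o : Omega n) : bool :=
  [forall i : 'I_k, nth ord0 (val o.2) i == tnth yk i].

(* invariance of b for theta1: for every t = k+1 >= 1 and every y^{t-1} = yk,
   theta_t(.) = P(S_t = . | Y^{t-1} = yk) equals theta1 and
   xi_t(.) = P(W_t = . | Y^{t-1} = yk) equals xi1.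
   Conditional statements are written multiplied out:
   P(S_t = s, Y^{t-1} = yk) = theta1(s) P(Y^{t-1} = yk)  (this is the
   definition of the conditional pmf whenever P(Y^{t-1} = yk) > 0, and is
   vacuous otherwise). *)
Definition invariant_policy : Prop :=
  forall (k : nat) (yk : k.-tuple 'I_my.+1),
    (forall s : 'I_ms.+1,
       Pr (@joint k.+1) (fun o => (Sv o k == (s : nat)%:Z) && Ypre yk o)
       = theta1 s * Pr (@joint k.+1) (Ypre yk)) /\
    (forall w : int,
       Pr (@joint k.+1) (fun o => (Wv o k == w) && Ypre yk o)
       = xi1 w * Pr (@joint k.+1) (Ypre yk)).

End Model.

(* Main.v *)
Require Import Defs.
From HB Require Import structures.
From mathcomp Require Import all_boot all_order all_algebra.
From mathcomp Require Import reals exp ring.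
Set Implicit Arguments. Unset Strict Implicit. Unset Printing Implicit Defensive.
Import Order.TTheory GRing.Theory Num.Theory.
Local Open Scope ring_scope.

Section L.
Variables (R : realType) (mx my ms : nat).
Variables (PX : 'I_mx.+1 -> R) (theta1 : 'I_ms.+1 -> R) (b : int -> 'I_my.+1 -> R).
Local Notation Om := (Omega mx my ms).
Local Notation p1 := (@joint R mx my ms PX theta1 b 1).
Local Notation p2 := (@joint R mx my ms PX theta1 b 2).

Lemma W0E (o : Om 1) : Wv o 0 = (o.1.1 : nat)%:Z - (tnth o.1.2 ord0 : nat)%:Z.
Proof. by rewrite /Wv /Sv big_ord0 addr0 /Xv (tnth_nth ord0). Qed.

Lemma p1E (o : Om 1) : p1 o = theta1 o.1.1 * (PX (tnth o.1.2 ord0) * b (Wv o 0) (tnth o.2 ord0)).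
Proof. by rewrite /joint big_ord1. Qed.

Lemma sum1 (F : Om 1 -> R) : \sum_(o : Om 1) F o =
  \sum_(s : 'I_ms.+1) \sum_(x : 'I_mx.+1) \sum_(y : 'I_my.+1) F (s, [tuple x], [tuple y]).
Proof.
rewrite pair_bigA pair_bigA /=.
rewrite (reindex (fun t : 'I_ms.+1 * 'I_mx.+1 * 'I_my.+1 => (t.1.1, [tuple t.1.2], [tuple t.2]) : Om 1)) //=.
exists (fun o : Om 1 => (o.1.1, tnth o.1.2 ord0, tnth o.2 ord0)) => [[[s x] y]|[[s xt] yt]] _ //=.
case: xt => -[|a []] // Ha; case: yt => -[|c []] // Hc.
by congr (_,_,_); apply: val_inj.
Qed.

Lemma sum2 (F : Om 2 -> R) : \sum_(o : Om 2) F o =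
  \sum_(s : 'I_ms.+1) \sum_(x : 'I_mx.+1) \sum_(y : 'I_my.+1) \sum_(x2 : 'I_mx.+1) \sum_(y2 : 'I_my.+1)
    F (s, [tuple x; x2], [tuple y; y2]).
Proof.
rewrite pair_bigA pair_bigA pair_bigA pair_bigA /=.
rewrite (reindex (fun t : 'I_ms.+1 * 'I_mx.+1 * 'I_my.+1 * 'I_mx.+1 * 'I_my.+1 =>
   (t.1.1.1.1, [tuple t.1.1.1.2; t.1.2], [tuple t.1.1.2; t.2]) : Om 2)) //=.
exists (fun o : Om 2 => (o.1.1, tnth o.1.2 ord0, tnth o.2 ord0, tnth o.1.2 ord_max, tnth o.2 ord_max))
  => [[[[[s x] y] x2] y2]|[[s xt] yt]] _ //=.
case: xt => -[|a [|a' []]] // Ha; case: yt => -[|c [|c' []]] // Hc.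
by congr (_,_,_); apply: val_inj.
Qed.

Hypothesis HPX : is_pmf PX.
Hypothesis Hth : is_pmf theta1.
Hypothesis HB : in_B mx ms b.

Lemma inW_sx (s : 'I_ms.+1) (x : 'I_mx.+1) : inW mx ms ((s : nat)%:Z - (x : nat)%:Z).
Proof. by exists s, x. Qed.

Lemma b_ge0 w y : inW mx ms w -> 0 <= b w y.
Proof. by move=> /HB [[H _] _]. Qed.

Lemma b_Yo w y : inW mx ms w -> b w y != 0 -> inYo ms w y.
Proof.
move=> Hw; apply: contraNT => Hy; apply/eqP.
have [[Hge Hs] Hyo] := HB Hw.
move: Hs; rewrite (bigID (inYo ms w)) /= Hyo => /(congr1 (fun z => z - 1)); rewrite addrC addrK subrr => H0.
by apply: (psumr_eq0P _ H0) => // i _; apply: Hge.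
Qed.

Lemma p1_ge0 (o : Om 1) : 0 <= p1 o.
Proof.
rewrite p1E; apply: mulr_ge0; first by case: Hth.
apply: mulr_ge0; first by case: HPX.
by rewrite W0E; apply: b_ge0; apply: inW_sx.
Qed.

Lemma p2_ge0 (o : Om 2) : 0 <= p2 o.
Proof.
rewrite /joint; apply: mulr_ge0; first by case: Hth.
apply: prodr_ge0 => i _; apply: mulr_ge0; first by case: HPX.
Abort.

Lemma Pr_ge0 n (p : Om n -> R) E : (forall o, 0 <= p o) -> 0 <= Pr p E.
Proof. by move=> H; apply: sumr_ge0. Qed.

Lemma Pr_ge n (p : Om n -> R) (E : pred (Om n)) o : (forall o, 0 <= p o) -> E o -> p o <= Pr p E.
Proof.
move=> H Eo; rewrite /Pr (bigD1 o) //= lerDl; apply: sumr_ge0 => i _; exact: H.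
Qed.

Lemma sum_if1 (I : finType) (i0 : I) (F : I -> R) :
  \sum_(i : I) (if i == i0 then F i else 0) = F i0.
Proof. by rewrite -big_mkcond big_pred1_eq. Qed.

Lemma sum_if (I : finType) (c : bool) (F : I -> R) :
  \sum_(i : I) (if c then F i else 0) = if c then \sum_i F i else 0.
Proof. by case: c => //; rewrite big1. Qed.

Lemma PrE1 (E : pred (Om 1)) : Pr p1 E =
  \sum_(s : 'I_ms.+1) \sum_(x : 'I_mx.+1) \sum_(y : 'I_my.+1)
    (if E (s, [tuple x], [tuple y]) then theta1 s * (PX x * b ((s:nat)%:Z - (x:nat)%:Z) y) else 0).
Proof.
rewrite /Pr big_mkcond sum1; apply: eq_bigr => s _; apply: eq_bigr => x _; apply: eq_bigr => y _.
by rewrite p1E W0E.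
Qed.

Lemma S2_in w y : inW mx ms w -> b w y != 0 ->
  exists s2 : 'I_ms.+1, w + (y : nat)%:Z = (s2 : nat)%:Z.
Proof.
move=> Hw Hb; have /andP [H0 Hm] := b_Yo Hw Hb.
have Ha := gez0_abs H0.
have Hl : (absz (w + (y:nat)%:Z)%R < ms.+1)%N by rewrite ltnS -lez_nat Ha.
by exists (inord (absz (w + (y:nat)%:Z)%R)); rewrite inordK // Ha.
Qed.

Definition proj (o : Om 2) : Om 1 := (o.1.1, [tuple tnth o.1.2 ord0], [tuple tnth o.2 ord0]).

Lemma p2E s x y x2 y2 : p2 (s, [tuple x; x2], [tuple y; y2]) =
  theta1 s * ((PX x * b ((s:nat)%:Z - (x:nat)%:Z) y) *
     (PX x2 * b ((s:nat)%:Z + ((y:nat)%:Z - (x:nat)%:Z) - (x2:nat)%:Z) y2)).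
Proof.
rewrite /joint big_ord_recr big_ord1 /=.
by rewrite /Wv /Sv big_ord0 big_ord1 addr0.
Qed.

Lemma marg (E : pred (Om 1)) : Pr p2 (fun o => E (proj o)) = Pr p1 E.
Proof.
rewrite PrE1 /Pr big_mkcond sum2; apply: eq_bigr => s _; apply: eq_bigr => x _; apply: eq_bigr => y _.
have Hp : forall x2 y2, proj (s,[tuple x;x2],[tuple y;y2]) = (s,[tuple x],[tuple y]).
  by move=> ??; congr (_,_,_); apply: val_inj.
under eq_bigr do under eq_bigr do rewrite Hp.
under eq_bigr do rewrite sum_if.
rewrite sum_if; case: (E _) => //.
under eq_bigr do under eq_bigr do rewrite p2E.
have [Hb|Hb] := eqVneq (b ((s:nat)%:Z - (x:nat)%:Z) y) 0.
  rewrite Hb !mulr0 big1 // => x2 _; rewrite big1 // => y2 _; by rewrite !(mulr0, mul0r).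
have [s2 Hs2] := S2_in (inW_sx s x) Hb.
have -> : (s:nat)%:Z + ((y:nat)%:Z - (x:nat)%:Z) = (s2:nat)%:Z by rewrite -Hs2 addrA addrAC.
under eq_bigr => x2 _ do rewrite -mulr_sumr -mulr_sumr -mulr_sumr (proj2 (proj1 (HB (inW_sx s2 x2)))) mulr1.
by rewrite -mulr_sumr -mulr_sumr (proj2 HPX) mulr1.
Qed.

Hypothesis Hinv : invariant_policy PX theta1 b.

Lemma ordeq n (a c : 'I_n) : (nat_of_ord a == nat_of_ord c) = (a == c).
Proof. by []. Qed.

Lemma PL n (p : Om n -> R) (A : finType) (F : Om n -> A) (E : pred (Om n)) :
  Pr p E = \sum_(a : A) Pr p (fun o => E o && (F o == a)).
Proof. by rewrite /Pr (partition_big F (fun _ => true)). Qed.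

Lemma Pr_ext n (p : Om n -> R) (E1 E2 : pred (Om n)) : E1 =1 E2 -> Pr p E1 = Pr p E2.
Proof. by move=> H; apply: eq_bigl. Qed.

Definition y1 (o : Om 1) := tnth o.2 ord0.
Definition x1 (o : Om 1) := tnth o.1.2 ord0.

Lemma Y0E (o : Om 1) : Yv o 0 = (y1 o : nat)%:Z.
Proof. by rewrite /Yv /y1 (tnth_nth ord0). Qed.
Lemma X0E (o : Om 1) : Xv o 0 = (x1 o : nat)%:Z.
Proof. by rewrite /Xv /x1 (tnth_nth ord0). Qed.

Lemma I0 (s : 'I_ms.+1) :
  Pr p1 (fun o => Wv o 0 + Xv o 0 == (s : nat)%:Z) = theta1 s * Pr p1 predT.
Proof.
have [H _] := Hinv [tuple].
have := H s; rewrite (@Pr_ext _ _ (Ypre [tuple]) predT); last first.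
  by move=> o; apply/forallP => -[].
move <-; apply: Pr_ext => o /=.
have -> : Ypre [tuple] o = true by apply/forallP => -[].
by rewrite andbT /Wv subrK.
Qed.

Lemma I1 (s : 'I_ms.+1) (y : 'I_my.+1) :
  Pr p1 (fun o => (Wv o 0 + Yv o 0 == (s : nat)%:Z) && (y1 o == y)) =
  theta1 s * Pr p1 (fun o => y1 o == y).
Proof.
have [H _] := Hinv [tuple y].
have HY : forall o : Om 2, Ypre [tuple y] o = (y1 (proj o) == y).
  move=> o; rewrite /Ypre /y1 /=.
  apply/forallP/eqP => [/(_ ord0) /eqP H0|Hy i].
  by change (tnth o.2 ord0 = y); rewrite (tnth_nth ord0); exact: H0.
  rewrite (ord1 i); apply/eqP; change (tnth o.2 ord0 = y) in Hy.
  by rewrite (tnth_nth ord0) in Hy; exact: Hy.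
have := H s.
rewrite (Pr_ext _ HY) (marg (fun o => y1 o == y)) => <-.
rewrite -(marg (fun o => (Wv o 0 + Yv o 0 == (s : nat)%:Z) && (y1 o == y))).
apply: Pr_ext => o /=; rewrite HY; congr (_ && _).
rewrite W0E Y0E /Sv big_ord1 /Xv /Yv /y1 /= !(tnth_nth ord0) /=.
by rewrite addrA addrAC.
Qed.

Lemma EZ (Z : Om 1 -> int) (g : 'I_ms.+1 -> R) :
  (forall o, p1 o != 0 -> exists s : 'I_ms.+1, Z o = (s : nat)%:Z) ->
  \sum_o p1 o * g (inord (absz (Z o))) =
  \sum_(s : 'I_ms.+1) g s * Pr p1 (fun o => Z o == (s : nat)%:Z).
Proof.
move=> HZ; rewrite /Pr.
under [RHS]eq_bigr do rewrite mulr_sumr big_mkcond.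
rewrite [RHS]exchange_big; apply: eq_bigr => o _ /=.
have [H0|H0] := eqVneq (p1 o) 0.
  by rewrite H0 mul0r big1 // => s _; case: ifP => // _; rewrite mulr0.
have [s0 Hs0] := HZ o H0.
under eq_bigr => s _ do rewrite Hs0 eqz_nat ordeq eq_sym.
by rewrite sum_if1 Hs0 /= inord_val mulrC.
Qed.

Lemma totY (s : 'I_ms.+1) :
  Pr p1 (fun o => Wv o 0 + Yv o 0 == (s : nat)%:Z) = theta1 s * Pr p1 predT.
Proof.
rewrite (PL _ y1) (PL _ y1 predT) mulr_sumr; apply: eq_bigr => y _; exact: I1.
Qed.

Lemma totX (s : 'I_ms.+1) :
  Pr p1 (fun o => Wv o 0 + Xv o 0 == (s : nat)%:Z) = theta1 s * Pr p1 predT.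
Proof. exact: I0. Qed.

Lemma Ebal (g : 'I_ms.+1 -> R) :
  \sum_o p1 o * g (inord (absz (Wv o 0 + Yv o 0))) =
  \sum_o p1 o * g (inord (absz (Wv o 0 + Xv o 0))).
Proof.
rewrite !EZ; first by apply: eq_bigr => s _; rewrite totY totX.
  by move=> o _; exists o.1.1; rewrite W0E X0E /x1 subrK.
move=> o; rewrite p1E W0E !mulf_eq0 => /norP [_ /norP [_ Hb]].
have [s2 Hs2] := S2_in (inW_sx o.1.1 (tnth o.1.2 ord0)) Hb.
by exists s2; rewrite -Hs2 Y0E.
Qed.

Lemma sum3 (s0 : 'I_ms.+1) (x0 : 'I_mx.+1) (F : 'I_ms.+1 -> 'I_mx.+1 -> 'I_my.+1 -> R) :
  \sum_(s : 'I_ms.+1) \sum_(x : 'I_mx.+1) \sum_(y : 'I_my.+1)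
     (if (s == s0) && (x == x0) then F s x y else 0) = \sum_y F s0 x0 y.
Proof.
have E1 : forall s x, \sum_y (if (s == s0) && (x == x0) then F s x y else 0) =
   if s == s0 then (if x == x0 then \sum_y F s x y else 0) else 0.
  by move=> s x; case: (s == s0); case: (x == x0) => //=; rewrite big1.
under eq_bigr do under eq_bigr do rewrite E1.
under eq_bigr do rewrite sum_if.
by rewrite sum_if1 sum_if1.
Qed.

Lemma tnth1 (T : Type) (x : T) : tnth [tuple x] ord0 = x.
Proof. by []. Qed.

Lemma PrX (o : Om 1) : Pr p1 (fun v => Xv v 0 == Xv o 0) = PX (x1 o).
Proof.
rewrite PrE1 X0E.
under eq_bigr do under eq_bigr do under eq_bigr do rewrite X0E eqz_nat ordeq /x1 /=.
under eq_bigr do under eq_bigr do rewrite sum_if.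
under eq_bigr do rewrite sum_if1.
under eq_bigr do rewrite -mulr_sumr -mulr_sumr (proj2 (proj1 (HB (inW_sx _ _)))) mulr1.
by rewrite -mulr_suml (proj2 Hth) mul1r.
Qed.

Lemma PrWX (o : Om 1) : Pr p1 (fun v => (Wv v 0 == Wv o 0) && (Xv v 0 == Xv o 0)) =
  theta1 o.1.1 * PX (x1 o).
Proof.
rewrite PrE1 X0E W0E.
under eq_bigr do under eq_bigr do under eq_bigr do rewrite X0E W0E eqz_nat ordeq /x1 /= !tnth1.
have Hc : forall (s : 'I_ms.+1) (x : 'I_mx.+1),
  ((s:nat)%:Z - (x:nat)%:Z == (o.1.1 : nat)%:Z - (tnth o.1.2 ord0 : nat)%:Z) && (x == tnth o.1.2 ord0)
  = (s == o.1.1) && (x == tnth o.1.2 ord0).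
  move=> s x; case Hx: (x == tnth o.1.2 ord0); last by rewrite !andbF.
  move/eqP: Hx => ->.
  by rewrite !andbT (inj_eq (addIr _)) eqz_nat ordeq.
under eq_bigr do under eq_bigr do under eq_bigr do rewrite Hc.
rewrite sum3 -mulr_sumr -mulr_sumr (proj2 (proj1 (HB (inW_sx _ _)))) mulr1.
by rewrite /x1.
Qed.

Lemma inW_W (o : Om 1) : inW mx ms (Wv o 0).
Proof. rewrite W0E; exact: inW_sx. Qed.

Lemma KLY (o : Om 1) :
  p1 o * ln (Pr p1 (fun v => (Wv v 0 == Wv o 0) && (Yv v 0 == Yv o 0)) /
     (Pr p1 (fun v => Wv v 0 == Wv o 0) * Pr p1 (fun v => Yv v 0 == Yv o 0))) =
  p1 o * (ln (theta1 (inord (absz (Wv o 0 + Yv o 0)))) - ln (Pr p1 (fun v => Wv v 0 == Wv o 0))).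
Proof.
have [H0|H0] := eqVneq (p1 o) 0; first by rewrite H0 !mul0r.
have Hp : 0 < p1 o by rewrite lt0r H0 p1_ge0.
have Hb : b (Wv o 0) (y1 o) != 0.
  by move: H0; rewrite p1E !mulf_eq0 => /norP [_ /norP [_ ]].
have [s2 Hs2] := S2_in (inW_W o) Hb.
set PW := Pr p1 (fun v => Wv v 0 == Wv o 0).
have HWY : Pr p1 (fun v => (Wv v 0 == Wv o 0) && (Yv v 0 == Yv o 0)) =
    theta1 s2 * Pr p1 (fun v => y1 v == y1 o).
  rewrite -I1; apply: Pr_ext => v /=; rewrite !Y0E eqz_nat ordeq -Hs2.
  case Hy: (y1 v == y1 o); last by rewrite !andbF.
  by move/eqP: Hy => ->; rewrite !andbT (inj_eq (addIr _)).
have HY : Pr p1 (fun v => Yv v 0 == Yv o 0) = Pr p1 (fun v => y1 v == y1 o).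
  by apply: Pr_ext => v; rewrite /= !Y0E eqz_nat ordeq.
rewrite HWY HY.
have PYp : 0 < Pr p1 (fun v => y1 v == y1 o).
  by apply: (lt_le_trans Hp); apply: Pr_ge => //; exact: p1_ge0.
have PWp : 0 < PW.
  by apply: (lt_le_trans Hp); apply: Pr_ge => //; exact: p1_ge0.
have Htp : 0 < theta1 s2.
  rewrite lt0r (proj1 Hth s2) andbT; apply/eqP => Ht.
  have : p1 o <= theta1 s2 * Pr p1 (fun v => y1 v == y1 o).
    rewrite -HWY; apply: Pr_ge => //=; [exact: p1_ge0 | by rewrite !eqxx].
  by rewrite Ht mul0r => /(lt_le_trans Hp); rewrite ltxx.
rewrite (_ : theta1 s2 * _ / (PW * _) = theta1 s2 / PW); last first.
  by field; rewrite (gt_eqF PYp) (gt_eqF PWp).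
rewrite ln_div ?posrE //.
by rewrite Y0E Hs2 /= inord_val.
Qed.

Lemma KLX (o : Om 1) :
  p1 o * ln (Pr p1 (fun v => (Wv v 0 == Wv o 0) && (Xv v 0 == Xv o 0)) /
     (Pr p1 (fun v => Wv v 0 == Wv o 0) * Pr p1 (fun v => Xv v 0 == Xv o 0))) =
  p1 o * (ln (theta1 (inord (absz (Wv o 0 + Xv o 0)))) - ln (Pr p1 (fun v => Wv v 0 == Wv o 0))).
Proof.
have [H0|H0] := eqVneq (p1 o) 0; first by rewrite H0 !mul0r.
have Hp : 0 < p1 o by rewrite lt0r H0 p1_ge0.
have Hxt : (theta1 o.1.1 != 0) && (PX (x1 o) != 0).
  by move: H0; rewrite p1E !mulf_eq0 => /norP [-> /norP [-> _]].
case/andP: Hxt => Ht Hx.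
have Htp : 0 < theta1 o.1.1 by rewrite lt0r Ht (proj1 Hth).
have Hxp : 0 < PX (x1 o) by rewrite lt0r Hx (proj1 HPX).
set PW := Pr p1 (fun v => Wv v 0 == Wv o 0).
have PWp : 0 < PW.
  by apply: (lt_le_trans Hp); apply: Pr_ge => //; exact: p1_ge0.
rewrite PrWX PrX.
rewrite (_ : theta1 o.1.1 * _ / (PW * _) = theta1 o.1.1 / PW); last first.
  by field; rewrite (gt_eqF Hxp) (gt_eqF PWp).
rewrite ln_div ?posrE //.
by rewrite W0E X0E /x1 subrK /= inord_val.
Qed.

Lemma main :
  mutinfo p1 (fun o => Wv o 0) (fun o => Yv o 0) = mutinfo p1 (fun o => Wv o 0) (fun o => Xv o 0).
Proof.
rewrite /mutinfo /=.
under eq_bigr do rewrite KLY mulrBr.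
under [RHS]eq_bigr do rewrite KLX mulrBr.
rewrite !sumrB; congr (_ - _).
exact: (Ebal (fun s => ln (theta1 s))).
Qed.
End L.

Theorem lemma7 (R : realType) (mx my ms : nat)
    (PX : 'I_mx.+1 -> R) (theta1 : 'I_ms.+1 -> R) (b : int -> 'I_my.+1 -> R) :
  (mx <= my)%N ->
  is_pmf PX -> is_pmf theta1 ->
  in_B mx ms b ->
  invariant_policy PX theta1 b ->
  mutinfo (@joint R mx my ms PX theta1 b 1)
          (fun o => Wv o 0) (fun o => Yv o 0)
  = mutinfo (@joint R mx my ms PX theta1 b 1)
          (fun o => Wv o 0) (fun o => Xv o 0).
Proof. by move=> _ HPX Hth HB Hinv; apply: main. Qed.
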